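(* Let $X$ and $Y$ be infinite sets with $|X| < |Y|$. Then: (i) every sequence of words that is universal for $\operatorname{Sym}(X)$ is universal for $\operatorname{Sym}(Y)$; (ii) if $2^{\aleph_0} < |X|$, then every sequence of words that is universal for $\operatorname{Sym}(Y)$ is universal for $\operatorname{Sym}(X)$. In particular, if $2^{\aleph_0} < |X| \leq |Y|$, then the sequences universal for $\operatorname{Sym}(X)$ are exactly the sequences universal for $\operatorname{Sym}(Y)$.
   Context: $\operatorname{Sym}(X)$ is the symmetric group on $X$. For an alphabet $A$ (a finite or countable set), $A^+$ is the free semigroup of non-empty words over $A$. A sequence $w_1, w_2, \ldots \in A^+$ is universal for a semigroup $S$ if for every sequence $s_1, s_2, \ldots \in S$ there is a semigroup homomorphism $\phi: A^+ \to S$ with $(w_n)\phi = s_n$ for all $n \geq 1$. *)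

(* Defs.v *)
From Stdlib Require Import List.
Import ListNotations.
Set Implicit Arguments.

Definition card_le (X Y : Type) : Prop :=
  exists f : X -> Y, forall x1 x2, f x1 = f x2 -> x1 = x2.

Definition card_lt (X Y : Type) : Prop := card_le X Y /\ ~ card_le Y X.

Definition infinite (X : Type) : Prop :=
  ~ exists l : list X, forall x : X, In x l.

Definition countable (A : Type) : Prop := card_le A nat.

Record Sym (X : Type) : Type := MkSym {
  sfun : X -> X;
  sinv : X -> X;
  sfun_inv : forall x, sfun (sinv x) = x;
  sinv_fun : forall x, sinv (sfun x) = x }.
Arguments sfun {X} _ _.
Arguments sinv {X} _ _.

(** Product in Sym(X), with maps acting on the right as in the paper:
    x (p q) = (x p) q, i.e. first p then q. *)
Definition sym_mul (X : Type) (p q : Sym X) : Sym X.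
Proof.
  refine (@MkSym X (fun x => sfun q (sfun p x)) (fun x => sinv p (sinv q x)) _ _).
  - intro x. rewrite (sfun_inv p). apply (sfun_inv q).
  - intro x. rewrite (sinv_fun q). apply (sinv_fun p).
Defined.

(** The free semigroup A^+ of non-empty words: a first letter and a tail. *)
Definition word (A : Type) : Type := (A * list A)%type.

Definition word_cat (A : Type) (u v : word A) : word A :=
  (fst u, snd u ++ fst v :: snd v).

Definition is_hom (A X : Type) (phi : word A -> Sym X) : Prop :=
  forall u v : word A, phi (word_cat u v) = sym_mul (phi u) (phi v).

(** A sequence of words w_1, w_2, ... (indexed here from 0) is universal
    for Sym(X). *)
Definition universal_sym (A X : Type) (w : nat -> word A) : Prop :=
  forall s : nat -> Sym X,
    exists phi : word A -> Sym X, is_hom phi /\ forall n, phi (w n) = s n.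

(* Main.v *)
Require Import Defs.
From Stdlib Require Import Arith Cantor List Classical PropExtensionality FunctionalExtensionality ProofIrrelevance ClassicalEpsilon Lia.
From mathcomp Require classical_sets.
Import ListNotations.


Definition injective {X Y} (f : X -> Y) := forall a b, f a = f b -> a = b.
Definition bij (X Y : Type) := exists (f : X -> Y) (g : Y -> X),
  (forall x, g (f x) = x) /\ (forall y, f (g y) = y).

Lemma bij_of_bijective {X Y} (h : X -> Y) : injective h -> (forall y, exists x, h x = y) -> bij X Y.
Proof.
  intros Hi Hs.
  destruct (choice (fun y x => h x = y) Hs) as [k Hk].
  exists h, k. split; [intro x; apply Hi; apply Hk | exact Hk].
Qed.

Theorem SB (X Y : Type) : card_le X Y -> card_le Y X -> bij X Y.
Proof.
  intros [f Hf] [g Hg].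
  set (Cn := fix Cn (n : nat) (x : X) : Prop :=
         match n with 0 => ~ exists y, g y = x
                    | S n => exists x', Cn n x' /\ g (f x') = x end).
  set (C := fun x => exists n, Cn n x).
  set (ginv := fun x => epsilon (inhabits (f x)) (fun y => g y = x)).
  assert (Hginv : forall x, ~ C x -> g (ginv x) = x).
  { intros x nC. unfold ginv. apply (epsilon_spec (inhabits (f x)) (fun y => g y = x)).
    apply NNPP; intro H. apply nC. exists 0. exact H. }
  set (h := fun x => if excluded_middle_informative (C x) then f x else ginv x).
  apply (bij_of_bijective h).
  - intros a b. unfold h.
    destruct (excluded_middle_informative (C a)) as [Ca|Ca];
    destruct (excluded_middle_informative (C b)) as [Cb|Cb]; intro E.
    + auto.
    + exfalso. apply Cb. destruct Ca as [n Hn]. exists (S n). exists a. split; auto.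
      rewrite E. apply Hginv; auto.
    + exfalso. apply Ca. destruct Cb as [n Hn]. exists (S n). exists b. split; auto.
      rewrite <- E. apply Hginv; auto.
    + rewrite <- (Hginv a Ca), <- (Hginv b Cb), E. reflexivity.
  - intro y. destruct (classic (C (g y))) as [Cg|Cg].
    + destruct Cg as [[|n] Hn].
      * exfalso. apply Hn. exists y; reflexivity.
      * destruct Hn as [x' [Hx' E]]. exists x'. unfold h.
        destruct (excluded_middle_informative (C x')) as [_|nC].
        -- apply Hg. exact E.
        -- exfalso; apply nC; exists n; exact Hx'.
    + exists (g y). unfold h. destruct (excluded_middle_informative (C (g y))) as [c|_].
      * contradiction.
      * apply Hg. apply Hginv. exact Cg.
Qed.

Lemma card_le_refl X : card_le X X.
Proof. exists (fun x => x). auto. Qed.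
Lemma card_le_trans X Y Z : card_le X Y -> card_le Y Z -> card_le X Z.
Proof. intros [f Hf] [g Hg]. exists (fun x => g (f x)). auto. Qed.
Lemma bij_le X Y : bij X Y -> card_le X Y.
Proof. intros [f [g [H1 H2]]]. exists f. intros a b E. rewrite <- (H1 a), <- (H1 b), E. auto. Qed.
Lemma bij_sym X Y : bij X Y -> bij Y X.
Proof. intros [f [g [H1 H2]]]. exists g, f. auto. Qed.
Lemma bij_trans X Y Z : bij X Y -> bij Y Z -> bij X Z.
Proof. intros [f [g [H1 H2]]] [f' [g' [H1' H2']]]. exists (fun x => f' (f x)), (fun z => g (g' z)).
  split; intros; [rewrite H1', H1 | rewrite H2, H2']; auto. Qed.

Lemma infinite_nat X : infinite X -> card_le nat X.
Proof.
  intros HX.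
  assert (Hc : forall l : list X, exists x, ~ In x l).
  { intro l. apply NNPP; intro H. apply HX. exists l. intro x. apply NNPP; intro Hx. apply H. exists x. exact Hx. }
  destruct (choice (fun l x => ~ In x l) Hc) as [c Hc'].
  set (L := fix L n := match n with 0 => [] | S n => c (L n) :: L n end).
  exists (fun n => c (L n)).
  assert (Hin : forall n m, n < m -> In (c (L n)) (L m)).
  { intros n m; induction m; intro H; [lia|]. simpl. destruct (Nat.eq_dec n m) as [->|]; [left; auto| right; apply IHm; lia]. }
  intros a b E. destruct (Nat.lt_trichotomy a b) as [H|[H|H]]; auto.
  - exfalso. apply (Hc' (L b)). rewrite <- E. apply Hin; auto.
  - exfalso. apply (Hc' (L a)). rewrite E. apply Hin; auto.
Qed.

Section ZornW.
Import classical_sets. Local Open Scope classical_set_scope.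
Lemma my_zorn (T:Type) (P : (T->Prop)->Prop) :
  (forall F : (T->Prop)->Prop, (forall A, F A -> P A) ->
     (forall A B, F A -> F B -> (forall x, A x -> B x) \/ (forall x, B x -> A x)) ->
     P (fun x => exists A, F A /\ A x)) ->
  exists A, P A /\ forall B, (forall x, A x -> B x) -> P B -> forall x, B x -> A x.
Proof.
  intros H.
  destruct (@Zorn_bigcup T P) as [A [PA HA]].
  - intros F FP Ftot. 
    assert (E : (\bigcup_(X in F) X) = (fun x => exists A, F A /\ A x)).
    { apply functional_extensionality; intro x; apply propositional_extensionality.
      split; [intros [A FA Ax]; exists A; split; assumption | intros [A [FA Ax]]; exists A; assumption]. }
    rewrite E. apply H. exact FP. intros A B FA FB. exact (Ftot A B FA FB).
  - exists A. split; [exact PA|]. intros B AB PB x Bx.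
    apply NNPP; intro nAx. apply (HA B); [|exact PB].
    split; [exact AB|]. intro BA. apply nAx. apply BA. exact Bx.
Qed.
End ZornW.

Lemma comparable X Y : card_le X Y \/ card_le Y X.
Proof.
  set (P := fun G : X * Y -> Prop =>
     (forall x y y', G (x,y) -> G (x,y') -> y = y') /\ (forall x x' y, G (x,y) -> G (x',y) -> x = x')).
  destruct (@my_zorn (X*Y) P) as [G [[G1 G2] HG]].
  - intros F FP Ftot. split.
    + intros x y y' [A [FA Ha]] [B [FB Hb]].
      destruct (Ftot A B FA FB) as [S|S]; [apply ((proj1 (FP B FB)) x); auto | apply ((proj1 (FP A FA)) x); auto].
    + intros x x' y [A [FA Ha]] [B [FB Hb]].
      destruct (Ftot A B FA FB) as [S|S]; [apply ((proj2 (FP B FB)) x x' y); auto | apply ((proj2 (FP A FA)) x x' y); auto].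
  - destruct (classic (forall x, exists y, G (x,y))) as [Hx|Hx].
    + left. destruct (choice (fun x y => G (x,y)) Hx) as [f Hf].
      exists f. intros a b E. apply (G2 a b (f a)); auto. rewrite E; auto.
    + destruct (classic (forall y, exists x, G (x,y))) as [Hy|Hy].
      * right. destruct (choice (fun y x => G (x,y)) Hy) as [f Hf].
        exists f. intros a b E. apply (G1 (f a) a b); auto. rewrite E; auto.
      * exfalso. apply not_all_ex_not in Hx. apply not_all_ex_not in Hy.
        destruct Hx as [x0 Hx0]. destruct Hy as [y0 Hy0].
        set (G' := fun p => G p \/ p = (x0,y0)).
        assert (PG' : P G').
        { split.
          - intros x y y' [H|H] [H'|H'].
            + eauto.
            + injection H'; intros; subst. exfalso; apply Hx0; eauto.
            + injection H; intros; subst. exfalso; apply Hx0; eauto.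
            + congruence.
          - intros x x' y [H|H] [H'|H'].
            + eauto.
            + injection H'; intros; subst. exfalso; apply Hy0; eauto.
            + injection H; intros; subst. exfalso; apply Hy0; eauto.
            + congruence. }
        apply Hx0. exists y0. apply (HG G'); [intros; left; auto | exact PG' | right; auto].
Qed.

Lemma infinite_sub_nat X (D : X -> Prop) :
  (forall l : list X, exists x, D x /\ ~ In x l) -> exists d : nat -> X, injective d /\ forall n, D (d n).
Proof.
  intros H.
  assert (Hi : infinite {x | D x}).
  { intros [l Hl]. destruct (H (map (@proj1_sig _ _) l)) as [x [Dx nIn]].
    apply nIn. apply (in_map (@proj1_sig _ _) l (exist _ x Dx)). apply Hl. }
  destruct (infinite_nat _ Hi) as [d Hd].
  exists (fun n => proj1_sig (d n)). split.
  - intros a b E. apply Hd. destruct (d a), (d b). simpl in E. subst. f_equal. apply proof_irrelevance.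
  - intro n. apply (proj2_sig (d n)).
Qed.

Theorem absorb X : infinite X -> card_le (X * nat) X.
Proof.
  intro HX.
  set (Dm := fun (G : (X*nat)*X -> Prop) x => exists y, G ((x,0),y)).
  set (P := fun G : (X*nat)*X -> Prop =>
    (forall a y y', G (a,y) -> G (a,y') -> y = y') /\
    (forall a a' y, G (a,y) -> G (a',y) -> a = a') /\
    (forall x k, Dm G x -> exists y, G ((x,k),y)) /\
    (forall a y, G (a,y) -> Dm G (fst a) /\ Dm G y) /\
    (forall y, Dm G y -> exists a, G (a,y))).
  destruct (@my_zorn _ P) as [G [[G1 [G2 [G3 [G4 G5]]]] HG]].
  - intros F FP Ftot.
    assert (HD : forall x, Dm (fun p => exists A, F A /\ A p) x <-> exists A, F A /\ Dm A x).
    { intro x; split. intros [y [A [FA H]]]. exists A; split; auto; exists y; auto.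
      intros [A [FA [y H]]]. exists y, A. auto. }
    split; [|split; [|split; [|split]]].
    + intros a y y' [A [FA Ha]] [B [FB Hb]].
      destruct (Ftot A B FA FB) as [S|S]; [apply ((proj1 (FP B FB)) a); auto | apply ((proj1 (FP A FA)) a); auto].
    + intros a a' y [A [FA Ha]] [B [FB Hb]].
      destruct (Ftot A B FA FB) as [S|S]; [apply ((proj1 (proj2 (FP B FB))) a a' y); auto | apply ((proj1 (proj2 (FP A FA))) a a' y); auto].
    + intros x k Hx. apply HD in Hx. destruct Hx as [A [FA Hx]].
      destruct ((proj1 (proj2 (proj2 (FP A FA)))) x k Hx) as [y Hy]. exists y, A; auto.
    + intros a y [A [FA H]]. split; apply HD; exists A; split; auto; apply (proj1 (proj2 (proj2 (proj2 (FP A FA)))) a y H).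
    + intros y Hy. apply HD in Hy. destruct Hy as [A [FA Hy]].
      destruct ((proj2 (proj2 (proj2 (proj2 (FP A FA))))) y Hy) as [a Ha]. exists a, A; auto.
  -
    assert (Efin : exists l, forall x, ~ Dm G x -> In x l).
    { apply NNPP; intro Hn.
      destruct (infinite_sub_nat X (fun x => ~ Dm G x)) as [e [He HeD]].
      { intro l. apply NNPP; intro H. apply Hn. exists l. intros x Hx. apply NNPP; intro H'. apply H. exists x; auto. }
      set (G' := fun p : (X*nat)*X => G p \/ exists m k, p = ((e m, k), e (Cantor.to_nat (m,k)))).
      assert (HD' : forall x, Dm G' x <-> Dm G x \/ exists m, x = e m).
      { intro x; split.
        - intros [y [H|[m [k H]]]]. left; exists y; auto. right; exists m. injection H; intros; subst; auto.
        - intros [[y H]|[m ->]]. exists y; left; auto. exists (e (Cantor.to_nat (m,0))). right. exists m, 0. auto. }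
      assert (PG' : P G').
      { split; [|split; [|split; [|split]]].
        - intros a y y' [H|[m [k H]]] [H'|[m' [k' H']]].
          + eauto.
          + injection H' as -> _. exfalso. apply (HeD m'). apply (G4 _ _ H).
          + injection H as -> _. exfalso. apply (HeD m). apply (G4 _ _ H').
          + injection H as -> ->. injection H' as E1 E2 ->. apply He in E1. subst. auto.
        - intros a a' y [H|[m [k H]]] [H'|[m' [k' H']]].
          + eauto.
          + injection H' as -> ->. exfalso. apply (HeD (Cantor.to_nat (m',k'))). apply (G4 _ _ H).
          + injection H as -> ->. exfalso. apply (HeD (Cantor.to_nat (m,k))). apply (G4 _ _ H').
          + pose proof (f_equal fst H) as H1. pose proof (f_equal snd H) as H2.
            pose proof (f_equal fst H') as H1'. pose proof (f_equal snd H') as H2'.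
            cbn [fst snd] in H1, H2, H1', H2'. subst.
            assert (E3 := H2'). apply He in E3. apply (f_equal Cantor.of_nat) in E3. rewrite !Cantor.cancel_of_to in E3.
            injection E3 as -> ->. auto.
        - intros x k Hx. apply HD' in Hx. destruct Hx as [Hx|[m ->]].
          + destruct (G3 x k Hx) as [y Hy]. exists y; left; auto.
          + exists (e (Cantor.to_nat (m,k))). right. exists m, k. auto.
        - intros a y [H|[m [k H]]]; split; apply HD'.
          + left; apply (G4 _ _ H).
          + left; apply (G4 _ _ H).
          + injection H; intros; subst. right; exists m; auto.
          + injection H; intros; subst. right; eexists; eauto.
        - intros y Hy. apply HD' in Hy. destruct Hy as [Hy|[j ->]].
          + destruct (G5 y Hy) as [a Ha]. exists a; left; auto.
          + destruct (Cantor.of_nat j) as [m k] eqn:Ej. exists (e m, k). right. exists m, k.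
            rewrite <- Ej, Cantor.cancel_to_of. auto. }
      apply (HeD 0). assert (Hin : G' ((e 0, 0), e (Cantor.to_nat (0,0)))) by (right; exists 0, 0; auto).
      apply (HG G' (fun p H => or_introl H) PG') in Hin. exists (e (Cantor.to_nat (0,0))). exact Hin. }
    destruct Efin as [l Hl].
    destruct (infinite_sub_nat X (Dm G)) as [d [Hd HdD]].
    { intro l'. apply NNPP; intro H. apply HX. exists (l ++ l'). intro x. apply in_or_app.
      destruct (classic (Dm G x)) as [Dx|nDx]; [right|left; auto].
      apply NNPP; intro H'. apply H. exists x; auto. }
    assert (Hidx : forall x, exists i, ~ Dm G x -> i < length l /\ nth i l x = x).
    { intro x. destruct (classic (Dm G x)) as [Dx|nDx]. exists 0; tauto.
      destruct (In_nth l x x (Hl x nDx)) as [i [Hi Hn]]. exists i. auto. }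
    destruct (choice _ Hidx) as [idx Hidx'].
    set (J := fun x => if excluded_middle_informative (Dm G x) then
                        (if excluded_middle_informative (exists n, d n = x) then
                           d (epsilon (inhabits 0) (fun n => d n = x) + length l) else x)
                       else d (idx x)).
    assert (HJD : forall x, Dm G (J x)).
    { intro x. unfold J. destruct (excluded_middle_informative (Dm G x)); [|apply HdD].
      destruct (excluded_middle_informative (exists n, d n = x)); [apply HdD|auto]. }
    assert (Heps : forall x, (exists n, d n = x) -> d (epsilon (inhabits 0) (fun n => d n = x)) = x).
    { intros x H. apply (epsilon_spec (inhabits 0) (fun n => d n = x) H). }
    assert (HJi : injective J).
    { intros a b. unfold J.
      destruct (excluded_middle_informative (Dm G a)) as [Da|Da];
      destruct (excluded_middle_informative (Dm G b)) as [Db|Db];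
      try destruct (excluded_middle_informative (exists n, d n = a)) as [Ea|Ea];
      try destruct (excluded_middle_informative (exists n, d n = b)) as [Eb|Eb]; intro E;
      first
      [ apply Hd in E; rewrite <- (Heps a Ea), <- (Heps b Eb); f_equal; lia
      | match type of E with d ?k = b => exfalso; apply Eb; exists k; exact E end
      | match type of E with a = d ?k => exfalso; apply Ea; exists k; symmetry; exact E end
      | assumption
      | apply Hd in E; destruct (Hidx' b Db); lia
      | apply Hd in E; destruct (Hidx' a Da); lia
      | exfalso; apply Db; rewrite <- E; apply HdD
      | exfalso; apply Da; rewrite E; apply HdD
      | apply Hd in E; destruct (Hidx' a Da) as [_ Ha]; destruct (Hidx' b Db) as [Hlb Hb];
        rewrite <- Ha, <- Hb, E; apply nth_indep; lia ]. }
    assert (HG3 : forall p : X * nat, exists y, G ((J (fst p), snd p), y)).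
    { intros [x k]. apply G3. apply HJD. }
    destruct (choice _ HG3) as [h Hh].
    exists h. intros [x k] [x' k'] E.
    assert (H1 := Hh (x,k)). assert (H2 := Hh (x',k')). rewrite <- E in H2.
    assert (E' := G2 _ _ _ H1 H2). simpl in E'.
    injection E' as E1 E2. apply HJi in E1. subst. reflexivity.
Qed.

Lemma Sym_eq {X} (p q : Sym X) : (forall x, sfun p x = sfun q x) -> p = q.
Proof.
  intro H.
  assert (Hi : forall x, sinv p x = sinv q x).
  { intro x. rewrite <- (sinv_fun q (sinv p x)). rewrite <- H. rewrite sfun_inv. reflexivity. }
  destruct p as [f g H1 H2], q as [f' g' H1' H2']. simpl in *.
  assert (f = f') by (apply functional_extensionality; auto).
  assert (g = g') by (apply functional_extensionality; auto).
  subst. f_equal; apply proof_irrelevance.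
Qed.

Lemma sfun_mul {X} (p q : Sym X) x : sfun (sym_mul p q) x = sfun q (sfun p x).
Proof. reflexivity. Qed.

Section Words.
Variable A : Type.

Definition phi_of {X} (f : A -> Sym X) (u : word A) : Sym X :=
  fold_left (fun p b => sym_mul p (f b)) (snd u) (f (fst u)).

Lemma fold_assoc {X} (f : A -> Sym X) l p q :
  fold_left (fun p b => sym_mul p (f b)) l (sym_mul p q) = sym_mul p (fold_left (fun p b => sym_mul p (f b)) l q).
Proof.
  revert q. induction l as [|b l IH]; intro q; simpl; auto.
  rewrite <- IH. f_equal. apply Sym_eq. intro x. reflexivity.
Qed.

Lemma phi_of_hom {X} (f : A -> Sym X) : is_hom (phi_of f).
Proof.
  intros [a l] [b m]. unfold phi_of, word_cat; simpl.
  rewrite fold_left_app. simpl. apply fold_assoc.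
Qed.

Lemma hom_phi_of {X} (phi : word A -> Sym X) : is_hom phi -> forall u, phi u = phi_of (fun a => phi (a, [])) u.
Proof.
  intros Hh [a l]. revert a. induction l as [|b l IH]; intro a.
  - reflexivity.
  - unfold phi_of; simpl. rewrite fold_assoc.
    assert (E : (a, b :: l) = word_cat (a, []) (b, l)) by reflexivity.
    rewrite E, Hh. f_equal. apply IH.
Qed.

Lemma phi_of_pt {X} (f : A -> Sym X) a l x :
  sfun (phi_of f (a, l)) x = fold_left (fun y b => sfun (f b) y) l (sfun (f a) x).
Proof.
  unfold phi_of; simpl. revert a x. 
  assert (G : forall p x, sfun (fold_left (fun p b => sym_mul p (f b)) l p) x = fold_left (fun y b => sfun (f b) y) l (sfun p x)).
  { induction l as [|b l IH]; intros p x; simpl; auto. rewrite IH. reflexivity. }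
  intros; apply G.
Qed.

Definition solvable (w : nat -> word A) (P : Type) (s : nat -> Sym P) :=
  exists f : A -> Sym P, forall n, phi_of f (w n) = s n.

Lemma universal_iff w P : universal_sym P w <-> forall s, solvable w P s.
Proof.
  split.
  - intros H s. destruct (H s) as [phi [Hh Hw]]. exists (fun a => phi (a, [])).
    intro n. rewrite <- hom_phi_of; auto.
  - intros H s. destruct (H s) as [f Hf]. exists (phi_of f). split; auto. apply phi_of_hom.
Qed.

Section Embed.
Variables (P Q : Type) (s : nat -> Sym P) (f : A -> Sym Q) (i : P -> Q) (r : Q -> P).
Hypothesis Hr : forall x, r (i x) = x.
Hypothesis Hf1 : forall a x, exists x', sfun (f a) (i x) = i x'.
Hypothesis Hf2 : forall a x, exists x', sinv (f a) (i x) = i x'.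

Definition emb_sym (a : A) : Sym P.
Proof.
  refine (@MkSym P (fun x => r (sfun (f a) (i x))) (fun x => r (sinv (f a) (i x))) _ _).
  - intro x. destruct (Hf2 a x) as [x' E]. rewrite E, Hr, <- E, sfun_inv. apply Hr.
  - intro x. destruct (Hf1 a x) as [x' E]. rewrite E, Hr, <- E, sinv_fun. apply Hr.
Defined.

Lemma emb_word u x : i (sfun (phi_of emb_sym u) x) = sfun (phi_of f u) (i x).
Proof.
  destruct u as [a l]. rewrite !phi_of_pt. simpl.
  destruct (Hf1 a x) as [x0 E]. rewrite E, Hr.
  revert x0 E. generalize (sfun (f a) (i x)). intros q x0 E. subst q.
  revert x0. induction l as [|b l IH]; intro x0; simpl; auto.
  destruct (Hf1 b x0) as [x1 E1]. rewrite E1, Hr. apply IH.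
Qed.

Lemma embed_solvable w : (forall n x, sfun (phi_of f (w n)) (i x) = i (sfun (s n) x)) -> solvable w P s.
Proof.
  intro Hw. exists emb_sym. intro n. apply Sym_eq. intro x.
  rewrite <- (Hr (sfun (phi_of emb_sym (w n)) x)), emb_word, Hw, Hr. reflexivity.
Qed.
End Embed.

Definition sub_sym {Y} (Q : Y -> Prop) (p : Sym Y) (H1 : forall y, Q y -> Q (sfun p y))
  (H2 : forall y, Q y -> Q (sinv p y)) : Sym {y | Q y}.
Proof.
  refine (@MkSym _ (fun z => exist _ (sfun p (proj1_sig z)) (H1 _ (proj2_sig z)))
                   (fun z => exist _ (sinv p (proj1_sig z)) (H2 _ (proj2_sig z))) _ _).
  - intros [z Hz]. simpl. apply eq_sig_hprop; [intros; apply proof_irrelevance|]. simpl. apply sfun_inv.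
  - intros [z Hz]. simpl. apply eq_sig_hprop; [intros; apply proof_irrelevance|]. simpl. apply sinv_fun.
Defined.

End Words.

Section Glue.
Variables (A Y I : Type) (w : nat -> word A) (pi : Y -> I) (s : nat -> Sym Y).
Hypothesis Hpi : forall n y, pi (sfun (s n) y) = pi y.
Lemma Hpi' : forall n y, pi (sinv (s n) y) = pi y.
Proof. intros n y. rewrite <- (Hpi n (sinv (s n) y)), sfun_inv. reflexivity. Qed.

Definition piece_s (i : I) (n : nat) : Sym {y | pi y = i} :=
  sub_sym (fun y => pi y = i) (s n) (fun y H => eq_trans (Hpi n y) H) (fun y H => eq_trans (Hpi' n y) H).

Hypothesis Hsol : forall i, solvable A w {y | pi y = i} (piece_s i).

Lemma piece_eq (g : forall j, {y | pi y = j} -> {y | pi y = j}) i (z : {y | pi y = i}) :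
  proj1_sig (g i z) = proj1_sig (g (pi (proj1_sig z)) (exist _ (proj1_sig z) eq_refl)).
Proof. destruct z as [z0 e]. simpl. subst i. reflexivity. Qed.

Definition glue_sym (f : forall i, A -> Sym {y | pi y = i}) (a : A) : Sym Y.
Proof.
  refine (@MkSym Y (fun y => proj1_sig (sfun (f (pi y) a) (exist _ y eq_refl)))
                   (fun y => proj1_sig (sinv (f (pi y) a) (exist _ y eq_refl))) _ _).
  - intro y. set (z := sinv (f (pi y) a) (exist (fun y0 => pi y0 = pi y) y eq_refl)).
    rewrite <- (piece_eq (fun j => sfun (f j a)) (pi y) z). unfold z. rewrite sfun_inv. reflexivity.
  - intro y. set (z := sfun (f (pi y) a) (exist (fun y0 => pi y0 = pi y) y eq_refl)).
    rewrite <- (piece_eq (fun j => sinv (f j a)) (pi y) z). unfold z. rewrite sinv_fun. reflexivity.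
Defined.

Lemma glue : solvable A w Y s.
Proof.
  set (f := fun i => proj1_sig (constructive_indefinite_description _ (Hsol i))).
  assert (Hf : forall i n, phi_of A (f i) (w n) = piece_s i n).
  { intro i. exact (proj2_sig (constructive_indefinite_description _ (Hsol i))). }
  set (G := glue_sym f).
  exists G. intro n. apply Sym_eq. intro y.
  assert (L : forall l i (z : {y | pi y = i}),
     fold_left (fun y b => sfun (G b) y) l (proj1_sig z) = proj1_sig (fold_left (fun z b => sfun (f i b) z) l z)).
  { induction l as [|b l IH]; intros i z; cbn [fold_left]; auto.
    assert (E : sfun (G b) (proj1_sig z) = proj1_sig (sfun (f i b) z)).
    { simpl. symmetry. apply (piece_eq (fun j => sfun (f j b))). }
    rewrite E. apply IH. }
  destruct (w n) as [a l] eqn:Ew.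
  rewrite phi_of_pt.
  assert (E0 : sfun (G a) y = proj1_sig (sfun (f (pi y) a) (exist (fun y0 => pi y0 = pi y) y eq_refl))) by reflexivity.
  rewrite E0, L.
  assert (E1 := f_equal (fun p => proj1_sig (sfun p (exist (fun y0 => pi y0 = pi y) y eq_refl))) (Hf (pi y) n)).
  simpl in E1. rewrite Ew, phi_of_pt in E1. exact E1.
Qed.
End Glue.

Lemma family_zorn (Y : Type) (Good : (Y -> Prop) -> Prop) :
  exists F : (Y -> Prop) -> Prop, (forall S, F S -> Good S) /\
    (forall S T y, F S -> F T -> S y -> T y -> S = T) /\
    (forall C, Good C -> (forall y, C y -> forall S, F S -> ~ S y) -> forall y, ~ C y).
Proof.
  set (P := fun F : (Y -> Prop) -> Prop => (forall S, F S -> Good S) /\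
    (forall S T y, F S -> F T -> S y -> T y -> S = T)).
  destruct (@my_zorn (Y -> Prop) P) as [F [[F1 F2] HF]].
  - intros Fs FP Ftot. split.
    + intros S [A [FA AS]]. apply (proj1 (FP A FA)). exact AS.
    + intros S T y [A [FA AS]] [B [FB BT]] Sy Ty.
      destruct (Ftot A B FA FB) as [H|H].
      * apply (proj2 (FP B FB) S T y); auto.
      * apply (proj2 (FP A FA) S T y); auto.
  - exists F. split; [exact F1|]. split; [exact F2|].
    intros C GC HC y Cy.
    set (F' := fun S => F S \/ S = C).
    assert (PF' : P F').
    { split.
      - intros S [H| ->]; auto.
      - intros S T z [HS| ->] [HT| ->] Sz Tz.
        + eapply F2; eauto.
        + exfalso. apply (HC z Tz S HS Sz).
        + exfalso. apply (HC z Sz T HT Tz).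
        + reflexivity. }
    assert (FC : F C) by (apply (HF F' (fun S H => or_introl H) PF'); right; reflexivity).
    exact (HC y Cy C FC Cy).
Qed.

Section Gen.
Variable A : Type.
Variable w : nat -> word A.

Definition id_sym (X : Type) : Sym X := @MkSym X (fun x => x) (fun x => x) (fun x => eq_refl) (fun x => eq_refl).

Lemma empty_solvable P s : (P -> False) -> solvable A w P s.
Proof. intro H. exists (fun _ => id_sym P). intro n. apply Sym_eq. intro x. destruct (H x). Qed.

Definition conj_sym {P Q} (b : P -> Q) (b' : Q -> P) (Hb : forall x, b' (b x) = x)
  (Hb' : forall y, b (b' y) = y) (p : Sym P) : Sym Q.
Proof.
  refine (@MkSym Q (fun y => b (sfun p (b' y))) (fun y => b (sinv p (b' y))) _ _).
  - intro y. rewrite Hb, sfun_inv. apply Hb'.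
  - intro y. rewrite Hb, sinv_fun. apply Hb'.
Defined.

Lemma iso_solvable P Q (b : P -> Q) (b' : Q -> P) (Hb : forall x, b' (b x) = x)
  (Hb' : forall y, b (b' y) = y) s : universal_sym Q w -> solvable A w P s.
Proof.
  intro HU. pose proof (proj1 (universal_iff A w Q) HU) as HU2.
  destruct (HU2 (fun n => conj_sym b b' Hb Hb' (s n))) as [f Hf].
  apply (embed_solvable A P Q s f b b' Hb).
  - intros a x. exists (b' (sfun (f a) (b x))). rewrite Hb'. reflexivity.
  - intros a x. exists (b' (sinv (f a) (b x))). rewrite Hb'. reflexivity.
  - intros n x. rewrite Hf. simpl. rewrite Hb. reflexivity.
Qed.

Lemma iso_solvable' P Q s : bij P Q -> universal_sym Q w -> solvable A w P s.
Proof. intros [b [b' [H1 H2]]]. apply (iso_solvable P Q b b' H1 H2). Qed.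

Definition PieceOK {Y} (s : nat -> Sym Y) (S : Y -> Prop) :=
  forall (H1 : forall n y, S y -> S (sfun (s n) y)) (H2 : forall n y, S y -> S (sinv (s n) y)),
    solvable A w {y | S y} (fun n => sub_sym S (s n) (H1 n) (H2 n)).

Lemma sub_solv_ext Y (s : nat -> Sym Y) (Q Q' : Y -> Prop) : Q = Q' -> PieceOK s Q' -> PieceOK s Q.
Proof. intros ->; auto. Qed.

Lemma partition_solvable Y (s : nat -> Sym Y) (F : (Y -> Prop) -> Prop)
  (cover : forall y, exists S, F S /\ S y)
  (disj : forall S T y, F S -> F T -> S y -> T y -> S = T)
  (inv1 : forall S n y, F S -> S y -> S (sfun (s n) y))
  (Hsol : forall S, F S -> PieceOK s S) : solvable A w Y s.
Proof.
  set (pi := fun y => epsilon (inhabits (fun _ : Y => False)) (fun S => F S /\ S y)).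
  assert (Hspec : forall y, F (pi y) /\ pi y y).
  { intro y. apply (epsilon_spec (inhabits (fun _ : Y => False)) (fun S => F S /\ S y)). apply cover. }
  assert (Hpi : forall n y, pi (sfun (s n) y) = pi y).
  { intros n y. destruct (Hspec y) as [F1 P1]. destruct (Hspec (sfun (s n) y)) as [F2 P2].
    apply (disj _ _ (sfun (s n) y) F2 F1 P2). apply inv1; auto. }
  apply (glue A Y _ w pi s Hpi).
  intro i. destruct (classic (F i)) as [Fi|nFi].
  - assert (E : (fun y => pi y = i) = i).
    { apply functional_extensionality; intro y; apply propositional_extensionality; split.
      - intros <-. apply Hspec.
      - intro iy. destruct (Hspec y) as [F1 P1]. apply (disj _ _ y F1 Fi P1 iy). }
    exact (sub_solv_ext Y s _ i E (Hsol i Fi) (fun n y H => eq_trans (Hpi n y) H)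
             (fun n y H => eq_trans (Hpi' Y _ pi s Hpi n y) H)).
  - apply empty_solvable. intros [y Hy]. apply nFi. rewrite <- Hy. apply Hspec.
Qed.
End Gen.

Section Closure.
Variables (K Y : Type) (t : K -> Sym Y).

Fixpoint gact (g : list (K * bool)) (y : Y) : Y :=
  match g with
  | [] => y
  | (k, b) :: g => (if b then sfun (t k) else sinv (t k)) (gact g y)
  end.

Definition Cl (B : Y -> Prop) (y : Y) := exists g x, B x /\ y = gact g x.

Lemma Cl_incl B y : B y -> Cl B y.
Proof. intro H. exists [], y. auto. Qed.
Lemma Cl_f B k y : Cl B y -> Cl B (sfun (t k) y).
Proof. intros [g [x [Bx ->]]]. exists ((k,true)::g), x. auto. Qed.
Lemma Cl_i B k y : Cl B y -> Cl B (sinv (t k) y).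
Proof. intros [g [x [Bx ->]]]. exists ((k,false)::g), x. auto. Qed.
Lemma Cl_min B (R : Y -> Prop) : (forall y, B y -> R y) -> (forall k y, R y -> R (sfun (t k) y)) ->
  (forall k y, R y -> R (sinv (t k) y)) -> forall y, Cl B y -> R y.
Proof.
  intros HB H1 H2 y [g [x [Bx ->]]]. induction g as [|[k b] g IH]; simpl; auto.
  destruct b; auto.
Qed.

Lemma gact_inv (R : Y -> Prop) : (forall k y, R y -> R (sfun (t k) y)) ->
  (forall k y, R y -> R (sinv (t k) y)) -> forall g y, R y -> R (gact g y).
Proof. intros H1 H2 g y Ry. induction g as [|[k b] g IH]; simpl; auto. destruct b; auto. Qed.

Variable e : K -> nat.
Hypothesis He : injective e.

Fixpoint encg (g : list (K * bool)) : nat :=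
  match g with
  | [] => 0
  | (k, b) :: g => S (Cantor.to_nat (Cantor.to_nat (e k, if b then 1 else 0), encg g))
  end.

Lemma to_nat_inj p q : Cantor.to_nat p = Cantor.to_nat q -> p = q.
Proof. intro E. rewrite <- (Cantor.cancel_of_to p), <- (Cantor.cancel_of_to q), E. reflexivity. Qed.

Lemma encg_inj : injective encg.
Proof.
  intro g. induction g as [|[k b] g IH]; intros [|[k' b'] g'] E; cbn [encg] in E; try discriminate; auto.
  apply eq_add_S in E. apply to_nat_inj in E. pose proof (f_equal fst E) as E1. pose proof (f_equal snd E) as E2. cbn [fst snd] in E1, E2.
  apply to_nat_inj in E1. pose proof (f_equal fst E1) as E3. pose proof (f_equal snd E1) as E4. cbn [fst snd] in E3, E4. apply He in E3. apply IH in E2. subst.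
  destruct b, b'; try discriminate; auto.
Qed.

Lemma Cl_card B : card_le {y | Cl B y} ({x | B x} * nat).
Proof.
  assert (H : forall z : {y | Cl B y}, exists p : {x | B x} * nat,
     exists g, snd p = encg g /\ proj1_sig z = gact g (proj1_sig (fst p))).
  { intros [y [g [x [Bx E]]]]. exists (exist _ x Bx, encg g), g. simpl. auto. }
  destruct (choice _ H) as [c Hc]. exists c. intros a b E.
  destruct (Hc a) as [g1 [E1 F1]]. destruct (Hc b) as [g2 [E2 F2]].
  rewrite E in E1, F1. rewrite E1 in E2. apply encg_inj in E2. subst g2.
  apply eq_sig_hprop; [intros; apply proof_irrelevance|]. rewrite F1, F2. reflexivity.
Qed.
End Closure.

Lemma card_le_sum A A' B B' : card_le A A' -> card_le B B' -> card_le (A + B) (A' + B').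
Proof.
  intros [f Hf] [g Hg]. exists (fun z => match z with inl a => inl (f a) | inr b => inr (g b) end).
  intros [a|b] [a'|b'] E; try discriminate; injection E as E; f_equal; auto.
Qed.

Lemma sum_le_X X : infinite X -> card_le (X + X) X.
Proof.
  intro HX. apply (card_le_trans _ (X * nat)); [|apply absorb; auto].
  exists (fun z => match z with inl a => (a, 0) | inr b => (b, 1) end).
  intros [a|b] [a'|b'] E; try discriminate; injection E as E; f_equal; auto.
Qed.

Lemma infinite_inhabited X : infinite X -> exists x : X, True.
Proof. intro HX. apply NNPP; intro H. apply HX. exists []. intro x. apply H. exists x; auto. Qed.

Lemma card_le_incl Y (P Q : Y -> Prop) : (forall y, P y -> Q y) -> card_le {y | P y} {y | Q y}.
Proof.
  intro H. exists (fun z => exist _ (proj1_sig z) (H _ (proj2_sig z))).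
  intros a b E. apply eq_sig_hprop; [intros; apply proof_irrelevance|]. apply (f_equal (@proj1_sig _ _)) in E. exact E.
Qed.

Lemma card_le_or Y (P Q : Y -> Prop) : card_le {y | P y \/ Q y} ({y | P y} + {y | Q y}).
Proof.
  assert (H : forall z : {y | P y \/ Q y}, exists v : {y | P y} + {y | Q y},
    match v with inl a => proj1_sig a = proj1_sig z | inr b => proj1_sig b = proj1_sig z end).
  { intros [y [Py|Qy]]. exists (inl (exist _ y Py)); reflexivity. exists (inr (exist _ y Qy)); reflexivity. }
  destruct (choice _ H) as [c Hc]. exists c. intros a b E.
  apply eq_sig_hprop; [intros; apply proof_irrelevance|].
  pose proof (Hc a) as Ha. pose proof (Hc b) as Hb. rewrite E in Ha. destruct (c b); congruence.
Qed.

Lemma sub_le Y (P : Y -> Prop) : card_le {y | P y} Y.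
Proof. exists (@proj1_sig _ _). intros a b E. apply eq_sig_hprop; [intros; apply proof_irrelevance|exact E]. Qed.

Theorem part_i (X Y : Type) : infinite X -> card_le X Y ->
  forall (A : Type) (w : nat -> word A), universal_sym X w -> universal_sym Y w.
Proof.
  intros HX XY A w HU. apply (universal_iff A w Y). intro s.
  set (Good := fun C : Y -> Prop => (forall n y, C y -> C (sfun (s n) y)) /\
      (forall n y, C y -> C (sinv (s n) y)) /\ bij {y | C y} X).
  destruct (family_zorn Y Good) as [F [FG [Fdisj Fmax]]].
  set (R := fun y => forall S, F S -> ~ S y).
  assert (R1 : forall n y, R y -> R (sfun (s n) y)).
  { intros n y Ry S FS Sy. apply (Ry S FS). rewrite <- (sinv_fun (s n) y). apply (FG S FS); auto. }
  assert (R2 : forall n y, R y -> R (sinv (s n) y)).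
  { intros n y Ry S FS Sy. apply (Ry S FS). rewrite <- (sfun_inv (s n) y). apply (FG S FS); auto. }
  assert (C1 : ~ card_le X {y | R y}).
  { intros [e He].
    set (B := fun y => exists x, proj1_sig (e x) = y).
    set (C := Cl nat Y s B).
    assert (CR : forall y, C y -> R y).
    { apply Cl_min; auto. intros y [x <-]. apply (proj2_sig (e x)). }
    assert (GC : Good C).
    { split; [|split].
      - intros n y Cy. apply Cl_f; auto.
      - intros n y Cy. apply Cl_i; auto.
      - apply bij_sym, SB.
        + exists (fun x => exist C (proj1_sig (e x)) (Cl_incl nat Y s B _ (ex_intro _ x eq_refl))).
          intros a b E. apply (f_equal (@proj1_sig _ _)) in E. simpl in E. apply He.
          apply eq_sig_hprop; [intros; apply proof_irrelevance|exact E].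
        + apply (card_le_trans _ ({x | B x} * nat)).
          * apply (Cl_card nat Y s (fun n => n)). intros a b E; exact E.
          * apply (card_le_trans _ (X * nat)); [|apply absorb; auto].
            assert (HB : forall z : {x | B x}, exists x, proj1_sig (e x) = proj1_sig z).
            { intros [y Hy]. exact Hy. }
            destruct (choice _ HB) as [c Hc].
            exists (fun p => (c (fst p), snd p)). intros [a k] [b k'] E. injection E as E1 E2. subst.
            f_equal. apply eq_sig_hprop; [intros; apply proof_irrelevance|]. rewrite <- (Hc a), <- (Hc b), E1. reflexivity. }
    destruct (infinite_inhabited X HX) as [x _].
    apply (Fmax C GC (fun y Cy => CR y Cy) (proj1_sig (e x))).
    apply Cl_incl. exists x. reflexivity. }
  assert (C2 : card_le {y | R y} X).
  { destruct (comparable X {y | R y}) as [H|H]; auto. contradiction. }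
  assert (C3 : exists S0, F S0).
  { apply NNPP; intro H. apply C1. destruct XY as [f Hf].
    exists (fun x => exist R (f x) (fun S FS _ => H (ex_intro _ S FS))).
    intros a b E. apply Hf. apply (f_equal (@proj1_sig _ _)) in E. exact E. }
  destruct C3 as [S0 FS0].
  set (U := fun y => S0 y \/ R y).
  set (F' := fun S => (F S /\ S <> S0) \/ S = U).
  apply (partition_solvable A w Y s F').
  - intro y. destruct (classic (R y)) as [Ry|nRy].
    + exists U. split; [right; auto|right; auto].
    + unfold R in nRy.
      apply not_all_ex_not in nRy. destruct nRy as [S HS].
      apply imply_to_and in HS. destruct HS as [FS Sy]. apply NNPP in Sy.
      destruct (classic (S = S0)) as [->|nS].
      * exists U. split; [right; auto|left; auto].
      * exists S. split; [left; auto|auto].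
  - intros S T y [[FS nS]| ->] [[FT nT]| ->] Sy Ty.
    + eapply Fdisj; eauto.
    + destruct Ty as [Ty|Ty]. exfalso; apply nS; eapply Fdisj; eauto. exfalso; apply (Ty S FS Sy).
    + destruct Sy as [Sy|Sy]. exfalso; apply nT; eapply Fdisj; eauto. exfalso; apply (Sy T FT Ty).
    + reflexivity.
  - intros S n y [[FS nS]| ->] Sy.
    + apply (FG S FS); auto.
    + destruct Sy as [Sy|Sy]; [left; apply (FG S0 FS0); auto|right; auto].
  - intros S HS H1 H2. apply (iso_solvable' A w _ X). 2: exact HU.
    destruct HS as [[FS nS]| ->].
    + apply (proj2 (proj2 (FG S FS))).
    + apply bij_sym, SB.
      * apply (card_le_trans _ {y | S0 y}).
        -- apply bij_le. apply bij_sym. apply (proj2 (proj2 (FG S0 FS0))).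
        -- apply card_le_incl. intros y Hy; left; auto.
      * apply (card_le_trans _ ({y | S0 y} + {y | R y})); [apply card_le_or|].
        apply (card_le_trans _ (X + X)); [|apply sum_le_X; auto].
        apply card_le_sum; auto. apply bij_le. apply (proj2 (proj2 (FG S0 FS0))).
Qed.

Definition EqIso {T1 T2} (a1 : nat -> T1 -> T1) (a2 : nat -> T2 -> T2) :=
  exists (b : T1 -> T2) (b' : T2 -> T1), (forall x, b' (b x) = x) /\ (forall y, b (b' y) = y) /\
    (forall n x, b (a1 n x) = a2 n (b x)).

Lemma EqIso_refl {T} (a : nat -> T -> T) : EqIso a a.
Proof. exists (fun x => x), (fun x => x). auto. Qed.

Lemma EqIso_sym {T1 T2} (a1 : nat -> T1 -> T1) (a2 : nat -> T2 -> T2) : EqIso a1 a2 -> EqIso a2 a1.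
Proof.
  intros [b [b' [H1 [H2 H3]]]]. exists b', b. split; [auto|split; [auto|]].
  intros n y. rewrite <- (H1 (b' (a2 n y))). rewrite <- (H1 (a1 n (b' y))). f_equal.
  rewrite H2, H3, H2. reflexivity.
Qed.

Lemma EqIso_trans {T1 T2 T3} (a1 : nat -> T1 -> T1) (a2 : nat -> T2 -> T2) (a3 : nat -> T3 -> T3) :
  EqIso a1 a2 -> EqIso a2 a3 -> EqIso a1 a3.
Proof.
  intros [b [b' [H1 [H2 H3]]]] [c [c' [K1 [K2 K3]]]].
  exists (fun x => c (b x)), (fun z => b' (c' z)). split; [|split].
  - intro x. rewrite K1, H1. auto.
  - intro z. rewrite H2, K2. auto.
  - intros n x. rewrite H3, K3. auto.
Qed.

Definition sum_act {T1 T2} (a1 : nat -> T1 -> T1) (a2 : nat -> T2 -> T2) (n : nat) (z : T1 + T2) : T1 + T2 :=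
  match z with inl x => inl (a1 n x) | inr y => inr (a2 n y) end.

Definition prod_act {N O} (r : nat -> O -> O) (n : nat) (p : N * O) : N * O := (fst p, r n (snd p)).

Lemma EqIso_sum {T1 T2 U1 U2} (a1 : nat -> T1 -> T1) (a2 : nat -> T2 -> T2) (c1 : nat -> U1 -> U1) (c2 : nat -> U2 -> U2) :
  EqIso a1 c1 -> EqIso a2 c2 -> EqIso (sum_act a1 a2) (sum_act c1 c2).
Proof.
  intros [b [b' [H1 [H2 H3]]]] [d [d' [K1 [K2 K3]]]].
  exists (fun z => match z with inl x => inl (b x) | inr y => inr (d y) end),
         (fun z => match z with inl x => inl (b' x) | inr y => inr (d' y) end).
  split; [|split].
  - intros [x|y]; f_equal; auto.
  - intros [x|y]; f_equal; auto.
  - intros n [x|y]; simpl; f_equal; auto.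
Qed.

Lemma EqIso_prod {N N' O} (r : nat -> O -> O) : bij N N' -> EqIso (@prod_act N O r) (@prod_act N' O r).
Proof.
  intros [f [g [H1 H2]]]. exists (fun p => (f (fst p), snd p)), (fun p => (g (fst p), snd p)).
  split; [|split].
  - intros [a o]; simpl; rewrite H1; auto.
  - intros [a o]; simpl; rewrite H2; auto.
  - intros n [a o]; reflexivity.
Qed.

Lemma EqIso_assoc {T1 T2 T3} (a1 : nat -> T1 -> T1) (a2 : nat -> T2 -> T2) (a3 : nat -> T3 -> T3) :
  EqIso (sum_act (sum_act a1 a2) a3) (sum_act a1 (sum_act a2 a3)).
Proof.
  exists (fun z => match z with inl (inl x) => inl x | inl (inr y) => inr (inl y) | inr u => inr (inr u) end),
         (fun z => match z with inl x => inl (inl x) | inr (inl y) => inl (inr y) | inr (inr u) => inr u end).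
  split; [|split].
  - intros [[x|y]|u]; auto.
  - intros [x|[y|u]]; auto.
  - intros n [[x|y]|u]; auto.
Qed.

Lemma EqIso_distr {N N' O} (r : nat -> O -> O) :
  EqIso (@prod_act (N + N') O r) (sum_act (@prod_act N O r) (@prod_act N' O r)).
Proof.
  exists (fun p => match fst p with inl a => inl (a, snd p) | inr b => inr (b, snd p) end),
         (fun z => match z with inl (a, o) => (inl a, o) | inr (b, o) => (inr b, o) end).
  split; [|split].
  - intros [[a|b] o]; auto.
  - intros [[a o]|[b o]]; auto.
  - intros n [[a|b] o]; auto.
Qed.

Lemma EqIso_of_bijective {T1 T2} (a1 : nat -> T1 -> T1) (a2 : nat -> T2 -> T2) (h : T1 -> T2) :
  injective h -> (forall y, exists x, h x = y) -> (forall n x, h (a1 n x) = a2 n (h x)) -> EqIso a1 a2.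
Proof.
  intros Hi Hs He. destruct (choice _ Hs) as [k Hk]. exists h, k. split; [intro x; apply Hi; apply Hk|split; auto].
Qed.

Definition sum_sym {T1 T2} (p : Sym T1) (q : Sym T2) : Sym (T1 + T2).
Proof.
  refine (@MkSym _ (fun z => match z with inl x => inl (sfun p x) | inr y => inr (sfun q y) end)
                   (fun z => match z with inl x => inl (sinv p x) | inr y => inr (sinv q y) end) _ _).
  - intros [x|y]; f_equal; apply sfun_inv.
  - intros [x|y]; f_equal; apply sinv_fun.
Defined.

Definition prod_sym {N O} (q : Sym O) : Sym (N * O).
Proof.
  refine (@MkSym _ (fun z => (fst z, sfun q (snd z))) (fun z => (fst z, sinv q (snd z))) _ _).
  - intros [a o]; simpl; rewrite sfun_inv; auto.
  - intros [a o]; simpl; rewrite sinv_fun; auto.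
Defined.

Lemma infinite_le X Y : card_le X Y -> infinite X -> infinite Y.
Proof.
  intros [f Hf] HX [l Hl]. destruct (infinite_inhabited X HX) as [x0 _].
  apply HX. exists (map (fun y => epsilon (inhabits x0) (fun x => f x = y)) l).
  intro x. assert (E : epsilon (inhabits x0) (fun x' => f x' = f x) = x).
  { apply Hf. apply (epsilon_spec (inhabits x0) (fun x' => f x' = f x)). exists x; auto. }
  rewrite <- E. apply (in_map (fun y => epsilon (inhabits x0) (fun x => f x = y))). apply Hl.
Qed.

Lemma universal_bij A (w : nat -> word A) Q Y : bij Q Y -> universal_sym Y w -> universal_sym Q w.
Proof. intros B HU. apply (universal_iff A w Q). intro s. apply (iso_solvable' A w Q Y s B HU). Qed.

Section Inv.
Variables (K Y : Type) (t : K -> Sym Y).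
Definition flipb (p : K * bool) := (fst p, negb (snd p)).
Definition ginv (g : list (K * bool)) := rev (map flipb g).
Lemma gact_app g1 g2 y : gact K Y t (g1 ++ g2) y = gact K Y t g1 (gact K Y t g2 y).
Proof. induction g1 as [|[k b] g1 IH]; simpl; auto. rewrite IH; auto. Qed.
Lemma gact_ginv g y : gact K Y t (ginv g) (gact K Y t g y) = y.
Proof.
  induction g as [|[k b] g IH]; simpl; auto. unfold ginv in *. simpl. rewrite gact_app. simpl.
  destruct b; simpl; [rewrite sinv_fun|rewrite sfun_inv]; auto.
Qed.

Variable A : Type.
Variable F : A -> Sym Y.
Lemma phi_closed (R : Y -> Prop) : (forall a y, R y -> R (sfun (F a) y)) -> (forall a y, R y -> R (sinv (F a) y)) ->
  forall u y, R y -> R (sfun (phi_of A F u) y) /\ R (sinv (phi_of A F u) y).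
Proof.
  intros H1 H2 [a l]. unfold phi_of; simpl.
  assert (G : forall l (p : Sym Y), (forall y, R y -> R (sfun p y) /\ R (sinv p y)) ->
     forall y, R y -> R (sfun (fold_left (fun p b => sym_mul p (F b)) l p) y) /\ R (sinv (fold_left (fun p b => sym_mul p (F b)) l p) y)).
  { clear a l. induction l as [|b l IH]; intros p Hp; simpl; auto.
    apply IH. intros y Ry. simpl. destruct (Hp y Ry) as [Ha Hb]. split; [apply H1; auto|].
    apply (proj2 (Hp _ (H2 b y Ry))). }
  apply G. intros y Ry; split; auto.
Qed.
End Inv.

Section Key.
Variables (A : Type) (w : nat -> word A) (Acnt : card_le A nat).
Variables (X Y : Type) (XY : card_le X Y) (HX : infinite X) (HU : universal_sym Y w).
Variables (s : nat -> Sym X) (P : X -> Prop).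
Hypothesis P1 : forall n y, P y -> P (sfun (s n) y).
Hypothesis P2 : forall n y, P y -> P (sinv (s n) y).
Hypothesis Pcnt : card_le {y | P y} nat.
Variable x : nat -> X.
Hypothesis Px : forall k, P (x k).
Notation ga := (gact nat X s).
Hypothesis Hdisj : forall k k' g g', ga g (x k) = ga g' (x k') -> k = k'.
Hypothesis Htype : forall k g g', ga g (x k) = ga g' (x k) <-> ga g (x 0) = ga g' (x 0).

Definition PT := {y | P y}.
Definition aPs n : Sym PT := sub_sym P (s n) (P1 n) (P2 n).
Definition aP n (p : PT) : PT := sfun (aPs n) p.

Definition InO y := Cl nat X s (fun z => z = x 0) y.
Definition OT := {y | InO y}.
Definition rOs n : Sym OT := sub_sym InO (s n) (Cl_f nat X s _ n) (Cl_i nat X s _ n).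
Definition rO n (o : OT) : OT := sfun (rOs n) o.

Definition Orbs y := exists k g, y = ga g (x k).
Lemma Orbs_back n y : Orbs (sfun (s n) y) -> Orbs y.
Proof. intros [k [g E]]. exists k, ((n,false)::g). simpl. rewrite <- E, sinv_fun. auto. Qed.
Lemma Orbs_back' n y : Orbs (sinv (s n) y) -> Orbs y.
Proof. intros [k [g E]]. exists k, ((n,true)::g). simpl. rewrite <- E, sfun_inv. auto. Qed.

Definition InM y := P y /\ ~ Orbs y.
Definition MT := {y | InM y}.
Definition aM n (m : MT) : MT :=
  exist InM (sfun (s n) (proj1_sig m))
    (conj (P1 n _ (proj1 (proj2_sig m))) (fun H => proj2 (proj2_sig m) (Orbs_back n _ H))).

Lemma ga_P g y : P y -> P (ga g y).
Proof. apply gact_inv; auto. Qed.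

Lemma O_code : forall o : OT, exists g, proj1_sig o = ga g (x 0).
Proof. intros [y Hy]. destruct Hy as [g [z [Hz E]]]. subst z. exists g. exact E. Qed.

Definition cg (o : OT) : list (nat * bool) := proj1_sig (constructive_indefinite_description _ (O_code o)).
Lemma cg_spec o : proj1_sig o = ga (cg o) (x 0).
Proof. exact (proj2_sig (constructive_indefinite_description _ (O_code o))). Qed.

Definition h1 (z : MT + (nat * OT)) : PT :=
  match z with
  | inl m => exist P (proj1_sig m) (proj1 (proj2_sig m))
  | inr (k, o) => exist P (ga (cg o) (x k)) (ga_P _ _ (Px k))
  end.

Lemma sig_ext {T} (Q : T -> Prop) (a b : {y | Q y}) : proj1_sig a = proj1_sig b -> a = b.
Proof. intro E. apply eq_sig_hprop; [intros; apply proof_irrelevance|exact E]. Qed.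

Lemma iso1 : EqIso (sum_act aM (@prod_act nat OT rO)) aP.
Proof.
  apply (EqIso_of_bijective _ _ h1).
  - intros [m|[k o]] [m'|[k' o']] E; apply (f_equal (@proj1_sig _ _)) in E; simpl in E.
    + f_equal. apply sig_ext. exact E.
    + exfalso. apply (proj2 (proj2_sig m)). exists k', (cg o'). exact E.
    + exfalso. apply (proj2 (proj2_sig m')). exists k, (cg o). symmetry; exact E.
    + assert (k = k') by (eapply Hdisj; eauto). subst k'. f_equal. f_equal.
      apply sig_ext. rewrite !cg_spec. apply (Htype k). exact E.
  - intros [y Py]. destruct (classic (Orbs y)) as [[k [g E]]|nO].
    + set (o := exist InO (ga g (x 0)) (ex_intro _ g (ex_intro _ (x 0) (conj eq_refl eq_refl))) : OT).
      exists (inr (k, o)). apply sig_ext. simpl. rewrite E. apply (Htype k). rewrite <- cg_spec. reflexivity.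
    + exists (inl (exist InM y (conj Py nO))). apply sig_ext. reflexivity.
  - intros n [m|[k o]]; apply sig_ext; simpl.
    + reflexivity.
    + assert (E : ga (cg (rO n o)) (x 0) = ga ((n,true) :: cg o) (x 0)).
      { rewrite <- cg_spec. simpl. rewrite <- cg_spec. reflexivity. }
      apply (Htype k) in E. rewrite E. reflexivity.
Qed.

Lemma prod_nat_le T1 T2 : card_le T1 nat -> card_le T2 nat -> card_le (T1 * T2) nat.
Proof.
  intros [f Hf] [g Hg]. exists (fun p => Cantor.to_nat (f (fst p), g (snd p))).
  intros [a b] [a' b'] E. apply to_nat_inj in E. simpl in E.
  pose proof (f_equal fst E) as E1. pose proof (f_equal snd E) as E2. simpl in E1, E2.
  apply Hf in E1. apply Hg in E2. subst. auto.
Qed.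

Definition Q := (PT + (Y * OT))%type.
Definition tQ n : Sym Q := sum_sym (aPs n) (prod_sym (rOs n)).

Lemma OT_cnt : card_le OT nat.
Proof.
  apply (card_le_trans _ ({z | z = x 0} * nat)).
  - apply (Cl_card nat X s (fun n => n)). intros a b E; exact E.
  - exists snd. intros [[a Ha] k] [[b Hb] k'] E. simpl in E. subst. reflexivity.
Qed.

Definition o0 : OT := exist InO (x 0) (Cl_incl nat X s _ (x 0) eq_refl).

Lemma bijQY : bij Q Y.
Proof.
  assert (HY : infinite Y) by (apply (infinite_le X Y XY HX)).
  apply SB.
  - apply (card_le_trans _ (Y + Y)); [|apply sum_le_X; auto].
    apply card_le_sum.
    + apply (card_le_trans _ X); [apply sub_le|exact XY].
    + apply (card_le_trans _ (Y * nat)); [|apply absorb; auto].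
      destruct OT_cnt as [e He]. exists (fun p => (fst p, e (snd p))).
      intros [a b] [a' b'] E. injection E as E1 E2. apply He in E2. subst. auto.
  - exists (fun y => inr (y, o0)). intros a b E. injection E as E. exact E.
Qed.

Lemma O_move (o o' : OT) : exists g, proj1_sig o' = ga g (proj1_sig o).
Proof.
  exists (cg o' ++ ginv nat (cg o)). rewrite gact_app, (cg_spec o), gact_ginv. apply cg_spec.
Qed.

Lemma InO_ga g y : InO y -> InO (ga g y).
Proof. apply gact_inv; intros; [apply Cl_f|apply Cl_i]; auto. Qed.

Lemma key : PieceOK A w s P.
Proof.
  intros H1 H2.
  assert (HUQ : universal_sym Q w) by (apply (universal_bij A w Q Y bijQY HU)).
  destruct (proj1 (universal_iff A w Q) HUQ tQ) as [F HF].
  set (Bq := fun q : Q => exists p, q = inl p).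
  set (Z := Cl A Q F Bq).
  assert (Zt : forall n q, Z q -> Z (sfun (tQ n) q) /\ Z (sinv (tQ n) q)).
  { intros n q Zq. rewrite <- (HF n). apply (phi_closed Q A F Z); auto.
    - intros; apply Cl_f; auto.
    - intros; apply Cl_i; auto. }
  set (J := fun k : Y => exists o, Z (inr (k, o))).
  assert (Ztrans : forall k o o', Z (inr (k, o)) -> Z (inr (k, o'))).
  { intros k o o' Zo. destruct (O_move o o') as [g Eg]. revert o' Eg.
    induction g as [|[n b] g IH]; intros o' Eg.
    - simpl in Eg. replace o' with o; auto. apply sig_ext. auto.
    - set (o3 := exist InO (ga g (proj1_sig o)) (InO_ga g _ (proj2_sig o)) : OT).
      assert (Z3 : Z (inr (k, o3))) by (apply IH; reflexivity).
      destruct b.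
      + replace o' with (rO n o3). apply (proj1 (Zt n _ Z3)). apply sig_ext. simpl. rewrite Eg. reflexivity.
      + replace o' with (sinv (rOs n) o3). apply (proj2 (Zt n _ Z3)). apply sig_ext. simpl. rewrite Eg. reflexivity. }
  set (JT := {k | J k}).
  assert (Zcnt : card_le {q | Z q} nat).
  { apply (card_le_trans _ ({q | Bq q} * nat)).
    - destruct Acnt as [e He]. apply (Cl_card A Q F e He).
    - apply prod_nat_le; [|apply card_le_refl].
      apply (card_le_trans _ PT); [|exact Pcnt].
      assert (Hc : forall q : {q | Bq q}, exists p, proj1_sig q = inl p) by (intros [q Hq]; exact Hq).
      destruct (choice _ Hc) as [c Hc']. exists c. intros a b E. apply sig_ext. rewrite Hc', Hc', E. reflexivity. }
  assert (Jcnt : card_le JT nat).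
  { apply (card_le_trans _ {q | Z q}); [|exact Zcnt].
    assert (Hc : forall k : JT, exists q : {q | Z q}, proj1_sig q = inr (proj1_sig k, o0)).
    { intros [k [o Hk]]. exists (exist Z (inr (k, o0)) (Ztrans k o o0 Hk)). reflexivity. }
    destruct (choice _ Hc) as [c Hc']. exists c. intros a b E.
    pose proof (Hc' a) as Ea. rewrite E, Hc' in Ea. injection Ea as Ea. apply sig_ext. auto. }
  assert (BJ : bij nat (nat + JT)).
  { apply SB.
    - exists inl. intros a b E. injection E; auto.
    - destruct Jcnt as [e He]. exists (fun z => match z with inl n => 2 * n | inr j => S (2 * e j) end).
      intros [a|a] [b|b] E; try lia.
      + f_equal. lia.
      + f_equal. apply He. lia. }
  assert (CH : EqIso aP (sum_act aP (@prod_act JT OT rO))).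
  { apply (EqIso_trans _ _ _ (EqIso_sym _ _ iso1)).
    apply (EqIso_trans _ (sum_act aM (@prod_act (nat + JT) OT rO))).
    { apply EqIso_sum; [apply EqIso_refl|apply EqIso_prod; exact BJ]. }
    apply (EqIso_trans _ (sum_act aM (sum_act (@prod_act nat OT rO) (@prod_act JT OT rO)))).
    { apply EqIso_sum; [apply EqIso_refl|apply EqIso_distr]. }
    apply (EqIso_trans _ (sum_act (sum_act aM (@prod_act nat OT rO)) (@prod_act JT OT rO))).
    { apply EqIso_sym, EqIso_assoc. }
    apply EqIso_sum; [apply iso1|apply EqIso_refl]. }
  destruct CH as [be [be' [Hb1 [Hb2 Hb3]]]].
  set (iota := fun z : PT + JT * OT => match z with inl p => inl p | inr (k, o) => inr (proj1_sig k, o) end : Q).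
  set (p0 := exist P (x 0) (Px 0) : PT).
  set (iota' := fun q : Q => match q with inl p => inl p
       | inr (k, o) => match excluded_middle_informative (J k) with
                       | left h => inr (exist J k h, o) | right _ => inl p0 end end : PT + JT * OT).
  assert (Hii : forall z, iota' (iota z) = z).
  { intros [p|[[k hk] o]]; simpl; auto. destruct (excluded_middle_informative (J k)) as [h|h].
    - f_equal. f_equal. apply sig_ext. reflexivity.
    - contradiction. }
  assert (Zi : forall z, Z (iota z)).
  { intros [p|[[k [o' hk]] o]]; simpl.
    - apply Cl_incl. exists p. auto.
    - apply (Ztrans k o' o hk). }
  assert (Zim : forall q, Z q -> exists z, q = iota z).
  { intros [p|[k o]] Zq.
    - exists (inl p). auto.
    - exists (inr (exist J k (ex_intro _ o Zq), o)). auto. }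
  apply (embed_solvable A PT Q _ F (fun p => iota (be p)) (fun q => be' (iota' q))).
  - intro p. rewrite Hii. apply Hb1.
  - intros a p. destruct (Zim _ (Cl_f A Q F Bq a _ (Zi (be p)))) as [z Ez].
    exists (be' z). rewrite Hb2. exact Ez.
  - intros a p. destruct (Zim _ (Cl_i A Q F Bq a _ (Zi (be p)))) as [z Ez].
    exists (be' z). rewrite Hb2. exact Ez.
  - intros n p. rewrite HF.
    transitivity (iota (be (aP n p))).
    + rewrite Hb3. destruct (be p) as [p'|[k o]]; reflexivity.
    + do 2 f_equal. apply sig_ext. reflexivity.
Qed.
End Key.

Definition C := nat -> bool.

Definition inj_on {T U} (D : T -> Prop) (f : T -> U) := forall a b, D a -> D b -> f a = f b -> a = b.

Lemma inj_on_of_le {T U} (D : T -> Prop) (u0 : U) : card_le {y | D y} U -> exists f : T -> U, inj_on D f.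
Proof.
  intros [f Hf]. exists (fun y => match excluded_middle_informative (D y) with left h => f (exist _ y h) | right _ => u0 end).
  intros a b Da Db. destruct (excluded_middle_informative (D a)) as [ha|]; [|contradiction].
  destruct (excluded_middle_informative (D b)) as [hb|]; [|contradiction].
  intro E. apply Hf in E. apply (f_equal (@proj1_sig _ _)) in E. exact E.
Qed.

Lemma le_of_inj_on {T U} (D : T -> Prop) (f : T -> U) : inj_on D f -> card_le {y | D y} U.
Proof.
  intro H. exists (fun z => f (proj1_sig z)). intros [a Ha] [b Hb] E. apply sig_ext. apply H; auto.
Qed.

Definition encCn (p : C * nat) : C := fun m =>
  let q := Cantor.of_nat m in
  match fst q with 0 => fst p (snd q) | 1 => Nat.eqb (snd q) (snd p) | _ => false end.

Lemma encCn_inj : injective encCn.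
Proof.
  intros [f n] [f' n'] E.
  assert (E1 : forall j, f j = f' j).
  { intro j. pose proof (f_equal (fun h => h (Cantor.to_nat (0, j))) E) as H. unfold encCn in H. cbv beta zeta in H.
    rewrite Cantor.cancel_of_to in H. exact H. }
  pose proof (f_equal (fun h => h (Cantor.to_nat (1, n))) E) as H. unfold encCn in H. cbv beta zeta in H.
  rewrite Cantor.cancel_of_to in H. cbn [fst snd] in H. rewrite Nat.eqb_refl in H.
  symmetry in H. apply Nat.eqb_eq in H. subst.
  f_equal. apply functional_extensionality. exact E1.
Qed.

Definition encCC (z : C + C) : C :=
  match z with inl f => fun m => match m with 0 => false | S m => f m end
             | inr f => fun m => match m with 0 => true | S m => f m end end.

Lemma encCC_inj : injective encCC.
Proof.
  intros [f|f] [f'|f'] E; simpl in E.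
  - f_equal. apply functional_extensionality. intro m. exact (f_equal (fun h => h (S m)) E).
  - pose proof (f_equal (fun h => h 0) E). discriminate.
  - pose proof (f_equal (fun h => h 0) E). discriminate.
  - f_equal. apply functional_extensionality. intro m. exact (f_equal (fun h => h (S m)) E).
Qed.

Definition encnat (n : nat) : C := fun m => Nat.eqb m n.
Lemma encnat_inj : injective encnat.
Proof. intros a b E. pose proof (f_equal (fun h => h a) E) as H. unfold encnat in H. cbv beta in H. rewrite Nat.eqb_refl in H.
  symmetry in H. apply Nat.eqb_eq in H. auto. Qed.

Section Orb.
Variables (X : Type) (s : nat -> Sym X) (x0 : X).
Notation ga := (gact nat X s).

Definition os (y : X) : X -> Prop := fun z => exists g, z = ga g y.

Lemma os_refl y : os y y.
Proof. exists []. reflexivity. Qed.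

Lemma os_eq y z : os y z -> os z = os y.
Proof.
  intros [g ->]. apply functional_extensionality; intro u; apply propositional_extensionality; split.
  - intros [g' ->]. exists (g' ++ g). rewrite gact_app. auto.
  - intros [g' ->]. exists (g' ++ ginv nat g). rewrite gact_app, gact_ginv. auto.
Qed.

Lemma os_s n y : os (sfun (s n) y) = os y.
Proof. apply os_eq. exists [(n,true)]. reflexivity. Qed.
Lemma os_si n y : os (sinv (s n) y) = os y.
Proof. apply os_eq. exists [(n,false)]. reflexivity. Qed.

Definition rep (y : X) : X := epsilon (inhabits x0) (os y).
Lemma rep_in y : os y (rep y).
Proof. apply (epsilon_spec (inhabits x0) (os y)). exists y. apply os_refl. Qed.
Lemma os_rep y : os (rep y) = os y.
Proof. apply os_eq. apply rep_in. Qed.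
Lemma rep_os y z : os y = os z -> rep y = rep z.
Proof. intro E. unfold rep. rewrite E. reflexivity. Qed.

Definition dec (m : nat) : list (nat * bool) := epsilon (inhabits []) (fun g => encg nat (fun n => n) g = m).
Lemma dec_enc g : dec (encg nat (fun n => n) g) = g.
Proof.
  apply (encg_inj nat (fun n => n) (fun a b E => E)).
  apply (epsilon_spec (inhabits []) (fun g' => encg nat (fun n => n) g' = encg nat (fun n => n) g)).
  exists g; auto.
Qed.

Definition tau (y : X) : C := fun m =>
  if excluded_middle_informative (ga (dec (fst (Cantor.of_nat m))) y = ga (dec (snd (Cantor.of_nat m))) y)
  then true else false.

Lemma tau_eq a b : tau a = tau b -> forall g g', ga g a = ga g' a <-> ga g b = ga g' b.
Proof.
  intros E g g'.
  pose proof (f_equal (fun h => h (Cantor.to_nat (encg nat (fun n => n) g, encg nat (fun n => n) g'))) E) as H.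
  unfold tau in H. cbv beta in H. rewrite Cantor.cancel_of_to in H. cbn [fst snd] in H. rewrite !dec_enc in H.
  destruct (excluded_middle_informative (ga g a = ga g' a));
  destruct (excluded_middle_informative (ga g b = ga g' b)); try discriminate; tauto.
Qed.
End Orb.

Lemma os_ga X s g (y : X) : os X s (gact nat X s g y) = os X s y.
Proof. apply os_eq. exists g. reflexivity. Qed.

Lemma natsum_le : card_le (nat + nat) nat.
Proof.
  exists (fun z => match z with inl n => 2 * n | inr n => S (2 * n) end).
  intros [a|a] [b|b] E; try (exfalso; lia); f_equal; lia.
Qed.

Theorem part_ii (X Y : Type) : infinite X -> card_lt (nat -> bool) X -> card_le X Y ->
  forall (A : Type) (w : nat -> word A), countable A -> universal_sym Y w -> universal_sym X w.
Proof.
  intros HX [CX nXC] XY A w Acnt HU. apply (universal_iff A w X). intro s.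
  destruct (infinite_inhabited X HX) as [x0 _].
  set (ga := gact nat X s).
  set (Good := fun P : X -> Prop => (forall n y, P y -> P (sfun (s n) y)) /\ (forall n y, P y -> P (sinv (s n) y)) /\
     card_le {y | P y} nat /\ exists x : nat -> X, (forall k, P (x k)) /\
       (forall k k' g g', ga g (x k) = ga g' (x k') -> k = k') /\
       (forall k g g', ga g (x k) = ga g' (x k) <-> ga g (x 0) = ga g' (x 0))).
  destruct (family_zorn X Good) as [F [FG [Fdisj Fmax]]].
  set (R := fun y => forall S, F S -> ~ S y).
  assert (R1 : forall n y, R y -> R (sfun (s n) y)).
  { intros n y Ry S FS Sy. apply (Ry S FS). rewrite <- (sinv_fun (s n) y). apply (FG S FS); auto. }
  assert (R2 : forall n y, R y -> R (sinv (s n) y)).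
  { intros n y Ry S FS Sy. apply (Ry S FS). rewrite <- (sfun_inv (s n) y). apply (FG S FS); auto. }
  assert (Ros : forall y z, R y -> os X s y z -> R z).
  { intros y z Ry [g ->]. apply gact_inv; auto. }
  set (os := os X s). set (rep := rep X s x0). set (tau := tau X s).
  assert (Rrep : forall y, R y -> R (rep y)).
  { intros y Ry. apply (Ros y); auto. apply rep_in. }
  assert (FIN : forall t : C, exists l : list (X -> Prop), forall y, R y -> tau (rep y) = t -> In (os y) l).
  { intro t. apply NNPP; intro Hn.
    set (D := fun O : X -> Prop => exists y, R y /\ tau (rep y) = t /\ O = os y).
    destruct (infinite_sub_nat (X -> Prop) D) as [d [Hd HdD]].
    { intro l. apply NNPP; intro H1. apply Hn. exists l. intros y Ry Ty. apply NNPP; intro H2.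
      apply H1. exists (os y). split; auto. exists y; auto. }
    destruct (choice _ HdD) as [yk Hyk].
    set (xk := fun k => rep (yk k)).
    set (G := Cl nat X s (fun z => exists k, z = xk k)).
    assert (GR : forall y, G y -> R y).
    { apply Cl_min; auto. intros y [k ->]. apply Rrep. apply (Hyk k). }
    assert (GG : Good G).
    { split; [|split; [|split]].
      - intros; apply Cl_f; auto.
      - intros; apply Cl_i; auto.
      - apply (card_le_trans _ ({z | exists k, z = xk k} * nat)).
        + apply (Cl_card nat X s (fun n => n)). intros a b E; exact E.
        + apply prod_nat_le; [|apply card_le_refl].
          assert (Hc : forall z : {z | exists k, z = xk k}, exists k, proj1_sig z = xk k) by (intros [z Hz]; exact Hz).
          destruct (choice _ Hc) as [c Hc']. exists c. intros a b E. apply sig_ext. rewrite Hc', Hc', E. auto.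
      - exists xk. split; [|split].
        + intro k. apply Cl_incl. exists k; auto.
        + intros k k' g g' E.
          assert (E2 : os (xk k) = os (xk k')).
          { unfold os. rewrite <- (os_ga X s g (xk k)), <- (os_ga X s g' (xk k')). fold ga. rewrite E. auto. }
          unfold xk, rep, os in E2. rewrite !os_rep in E2.
          destruct (Hyk k) as [_ [_ Ek]]. destruct (Hyk k') as [_ [_ Ek']].
          apply Hd. rewrite Ek, Ek'. exact E2.
        + intros k g g'. apply tau_eq.
          destruct (Hyk k) as [_ [Tk _]]. destruct (Hyk 0) as [_ [T0 _]]. unfold xk. 
          unfold tau, rep in *. rewrite Tk, T0. auto. }
    apply (Fmax G GG (fun y Gy => GR y Gy) (xk 0)). apply Cl_incl. exists 0; auto. }
  destruct (choice _ FIN) as [L HL].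
  assert (Hpf : forall y, exists p : nat * list (nat * bool), R y ->
     nth (fst p) (L (tau (rep y))) (fun _ => False) = os y /\ y = ga (snd p) (rep y)).
  { intro y. destruct (classic (R y)) as [Ry|nRy]; [|exists (0, []); tauto].
    destruct (In_nth _ _ (fun _ => False) (HL _ y Ry eq_refl)) as [i [_ Hi]].
    assert (Hy : os (rep y) y). { unfold os, rep. rewrite os_rep. apply os_refl. }
    destruct Hy as [g Hg]. exists (i, g). intros _. split; auto. }
  destruct (choice _ Hpf) as [pf Hpf'].
  set (rho := fun y => encCn (tau (rep y), Cantor.to_nat (fst (pf y), encg nat (fun n => n) (snd (pf y))))).
  assert (rho_inj : inj_on R rho).
  { intros a b Ra Rb E. apply encCn_inj in E. pose proof (f_equal fst E) as E1. pose proof (f_equal snd E) as E2.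
    cbn [fst snd] in E1, E2. apply to_nat_inj in E2.
    pose proof (f_equal fst E2) as E3. pose proof (f_equal snd E2) as E4. cbn [fst snd] in E3, E4.
    apply (encg_inj nat (fun n => n) (fun a b E => E)) in E4.
    destruct (Hpf' a Ra) as [Na Ya]. destruct (Hpf' b Rb) as [Nb Yb].
    rewrite E1, E3 in Na. rewrite Na in Nb.
    assert (Er : rep a = rep b) by (apply rep_os; exact Nb).
    rewrite Ya, Yb, E4, Er. reflexivity. }
  set (ROrb := {O : X -> Prop | exists y, R y /\ O = os y}).
  set (Ft := {S : X -> Prop | F S}).
  assert (ROC : card_le ROrb C).
  { exists (fun O => rho (epsilon (inhabits x0) (proj1_sig O))).
    intros [O [y [Ry ->]]] [O' [y' [Ry' ->]]] E. simpl in E.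
    apply sig_ext. simpl.
    change (rho (rep y) = rho (rep y')) in E. apply rho_inj in E; auto.
    unfold os. rewrite <- (os_rep X s x0 y), <- (os_rep X s x0 y'). fold rep. rewrite E. auto. }
  assert (ClB : ~ card_le Ft C).
  { intro HK. apply nXC.
    apply (inj_on_of_le F (fun _ => false)) in HK.
    destruct HK as [kap Hkap].
    assert (He : forall S, exists f : X -> nat, F S -> inj_on S f).
    { intro S. destruct (classic (F S)) as [FS|nFS]; [|exists (fun _ => 0); tauto].
      destruct (FG S FS) as [_ [_ [Hc _]]]. destruct (inj_on_of_le S 0 Hc) as [f Hf]. exists f; auto. }
    destruct (choice _ He) as [e He'].
    assert (Hm : forall y, exists c : C, (forall S, F S -> S y -> c = encCC (inl (encCn (kap S, e S y)))) /\
                                       (R y -> c = encCC (inr (rho y)))).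
    { intro y. destruct (classic (exists S, F S /\ S y)) as [[S [FS Sy]]|nS].
      - exists (encCC (inl (encCn (kap S, e S y)))). split.
        + intros S' FS' S'y. rewrite (Fdisj S S' y FS FS' Sy S'y). auto.
        + intro Ry. exfalso. apply (Ry S FS Sy).
      - exists (encCC (inr (rho y))). split; auto. intros S FS Sy. exfalso. apply nS. eauto. }
    destruct (choice _ Hm) as [m Hm'].
    exists m. intros a b E.
    destruct (classic (exists S, F S /\ S a)) as [[S [FS Sa]]|nSa];
    destruct (classic (exists S, F S /\ S b)) as [[T [FT Tb]]|nSb].
    - rewrite (proj1 (Hm' a) S FS Sa), (proj1 (Hm' b) T FT Tb) in E.
      apply encCC_inj in E. injection E as E. apply encCn_inj in E. injection E as E1 E2.
      apply Hkap in E1; auto. subst T. apply (He' S FS); auto.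
    - assert (Rb : R b) by (intros S' FS' S'b; apply nSb; eauto).
      rewrite (proj1 (Hm' a) S FS Sa), (proj2 (Hm' b) Rb) in E. apply encCC_inj in E. discriminate.
    - assert (Ra : R a) by (intros S' FS' S'a; apply nSa; eauto).
      rewrite (proj1 (Hm' b) T FT Tb), (proj2 (Hm' a) Ra) in E. apply encCC_inj in E. discriminate.
    - assert (Ra : R a) by (intros S' FS' S'a; apply nSa; eauto).
      assert (Rb : R b) by (intros S' FS' S'b; apply nSb; eauto).
      rewrite (proj2 (Hm' a) Ra), (proj2 (Hm' b) Rb) in E. apply encCC_inj in E. injection E as E.
      apply rho_inj; auto. }
  assert (ROF : card_le ROrb Ft).
  { destruct (comparable ROrb Ft) as [H|H]; auto. exfalso. apply ClB. eapply card_le_trans; eauto. }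
  destruct ROF as [iota Hiota].
  set (iO := fun O : X -> Prop => match excluded_middle_informative (exists y, R y /\ O = os y) with
             | left h => proj1_sig (iota (exist _ O h)) | right _ => (fun _ => False) end).
  set (tgt := fun y => iO (os y)).
  assert (tgtF : forall y, R y -> F (tgt y)).
  { intros y Ry. unfold tgt, iO. destruct (excluded_middle_informative _) as [h|h].
    - apply (proj2_sig (iota _)).
    - exfalso. apply h. exists y; auto. }
  assert (tgt_inj : forall a b, R a -> R b -> tgt a = tgt b -> os a = os b).
  { intros a b Ra Rb. unfold tgt, iO.
    destruct (excluded_middle_informative (exists y, R y /\ os a = os y)) as [h|h]; [|exfalso; apply h; eauto].
    destruct (excluded_middle_informative (exists y, R y /\ os b = os y)) as [h'|h']; [|exfalso; apply h'; eauto].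
    intro E. apply sig_ext in E. apply Hiota in E. apply (f_equal (@proj1_sig _ _)) in E. exact E. }
  assert (tgt_s : forall n y, tgt (sfun (s n) y) = tgt y).
  { intros n y. unfold tgt, os. rewrite os_s. auto. }
  assert (tgt_si : forall n y, tgt (sinv (s n) y) = tgt y).
  { intros n y. unfold tgt, os. rewrite os_si. auto. }
  set (ext := fun S y => S y \/ (R y /\ tgt y = S)).
  set (F' := fun T => exists S, F S /\ T = ext S).
  apply (partition_solvable A w X s F').
  - intro y. destruct (classic (exists S, F S /\ S y)) as [[S [FS Sy]]|nS].
    + exists (ext S). split; [exists S; auto|left; auto].
    + assert (Ry : R y) by (intros S' FS' S'y; apply nS; eauto).
      exists (ext (tgt y)). split; [exists (tgt y); split; auto|right; auto].
  - intros T T' y [S [FS ->]] [S' [FS' ->]] [Sy|[Ry Ty]] [S'y|[Ry' Ty']].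
    + rewrite (Fdisj S S' y FS FS' Sy S'y). auto.
    + exfalso. apply (Ry' S FS Sy).
    + exfalso. apply (Ry S' FS' S'y).
    + rewrite <- Ty, <- Ty'. auto.
  - intros T n y [S [FS ->]] [Sy|[Ry Ty]].
    + left. apply (FG S FS); auto.
    + right. split; [apply R1; auto|rewrite tgt_s; auto].
  - intros T [S [FS ->]].
    destruct (FG S FS) as [G1 [G2 [Gc [x [Gx [Gd Gt]]]]]].
    refine (key A w Acnt X Y XY HX HU s (ext S)
             (fun n y H => match H with or_introl h => or_introl (G1 n y h)
                           | or_intror (conj r t) => or_intror (conj (R1 n y r) (eq_trans (tgt_s n y) t)) end)
             (fun n y H => match H with or_introl h => or_introl (G2 n y h)
                           | or_intror (conj r t) => or_intror (conj (R2 n y r) (eq_trans (tgt_si n y) t)) end)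
             _ x (fun k => or_introl (Gx k)) Gd Gt).
    apply (card_le_trans _ ({y | S y} + {y | R y /\ tgt y = S})); [apply card_le_or|].
    apply (card_le_trans _ (nat + nat)).
    + apply card_le_sum; auto.
      destruct (classic (exists y0, R y0 /\ tgt y0 = S)) as [[y0 [Ry0 Ty0]]|nE].
      * assert (Hc : forall z : {y | R y /\ tgt y = S}, exists g, proj1_sig z = ga g y0).
        { intros [y [Ry Ty]]. simpl. assert (E : os y = os y0) by (apply tgt_inj; auto; congruence).
          assert (Hy : os y0 y) by (rewrite <- E; apply os_refl). destruct Hy as [g Hg]. exists g. exact Hg. }
        destruct (choice _ Hc) as [c Hc']. exists (fun z => encg nat (fun n => n) (c z)).
        intros a b E. apply (encg_inj nat (fun n => n) (fun a b E => E)) in E. apply sig_ext. rewrite Hc', Hc', E. auto.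
      * exists (fun _ => 0). intros [a Ha]. exfalso. apply nE. exists a. exact Ha.
    + apply natsum_le.
Qed.

Theorem corollary2p2 :
  (forall (X Y : Type), infinite X -> infinite Y -> card_lt X Y ->
     (forall (A : Type) (w : nat -> word A), countable A ->
        universal_sym X w -> universal_sym Y w) /\
     (card_lt (nat -> bool) X ->
        forall (A : Type) (w : nat -> word A), countable A ->
        universal_sym Y w -> universal_sym X w)) /\
  (forall (X Y : Type), infinite X -> infinite Y ->
     card_lt (nat -> bool) X -> card_le X Y ->
     forall (A : Type) (w : nat -> word A), countable A ->
       (universal_sym X w <-> universal_sym Y w)).
Proof.
  split.
  - intros X Y HX HY [XY nYX]. split.
    + intros A w _ HU. apply (part_i X Y HX XY A w HU).
    + intros HC A w Acnt HU. apply (part_ii X Y HX HC XY A w Acnt HU).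
  - intros X Y HX HY HC XY A w Acnt. split.
    + intro HU. apply (part_i X Y HX XY A w HU).
    + intro HU. apply (part_ii X Y HX HC XY A w Acnt HU).
Qed.
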